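(* Let $H$, $d$, $(X,\mu)$, $\mathcal{A}$, $(N_s)$, $\delta_r,s_r,\sigma_s$ be as in the context and fix an integer $r\ge3$. Fix $0\le\alpha<\beta$ and an integer $s>s_r+r$. Then for any partition $\mathcal{Q}$ of $[r]$, any $\underline h\in\Delta_{\mathcal{Q}}(\alpha,\beta)$ and any $f\in\mathcal{A}$, $$|\psi_{f,\underline h}(I)-\psi^{\mathcal{Q}}_{f,\underline h}(I)|\le C_{r,s}\,e^{-(\beta\delta_r-r\alpha\sigma_s)}N_s(f)^{|I|}\quad\text{for all }I\subset[r],$$ where $C_{r,s}$ depends only on $r$ and $s$.
   Context: $H$ is a locally compact second countable group with left-invariant metric $d$, acting measure-preservingly on a probability space $(X,\mu)$; $h\cdot f=f\circ h^{-1}$. $\mathcal{A}\subset L^\infty(X,\mu)$ is an $H$-invariant subalgebra and $(N_s)_{s\ge1}$ seminorms on it with (constants depending only on $s$): $N_s(f)\ll N_{s+1}(f)$; $\|f\|_{L^\infty}\ll N_s(f)$; $N_s(h\cdot f)\ll e^{\sigma_s d(h,e)}N_s(f)$ for some $\sigma_s>0$; $N_s(f_1f_2)\ll N_{s+1}(f_1)N_{s+1}(f_2)$. Exponential mixing of all orders: for every $k\ge2$ there are $\delta_k>0$ and an integer $s_k>0$ with $\big|\mu(\prod_{i=1}^k h_i\cdot f_i)-\prod_i\mu(f_i)\big|\ll_{k,s}e^{-\delta_k\min_{i\ne j}d(h_i,h_j)}\prod_iN_s(f_i)$ for all $s>s_k$, $f_i\in\mathcal{A}$, $h_i\in H$;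 $(\sigma_s)$, $(s_k)$ increasing, $(\delta_k)$ decreasing, $\delta_k<k\sigma_s$. Distances: $d^I(\underline h)=\max_{i,j\in I}d(h_i,h_j)$, $d_{I,J}(\underline h)=\min_{i\in I,j\in J}d(h_i,h_j)$, $d^{\mathcal{Q}}=\max_{I\in\mathcal{Q}}d^I$, $d_{\mathcal{Q}}=\min\{d_{I,J}:I\ne J\in\mathcal{Q}\}$, $\Delta_{\mathcal{Q}}(\alpha,\beta)=\{\underline h\in H^r:d^{\mathcal{Q}}(\underline h)\le\alpha,\ d_{\mathcal{Q}}(\underline h)>\beta\}$. For $f\in\mathcal{A}$, $\underline h\in H^r$: $\psi_{f,\underline h}(I)=\mu(\prod_{i\in I}h_i\cdot f)$ for $I\ne\emptyset$, $\psi_{f,\underline h}(\emptyset)=1$, and $\psi^{\mathcal{Q}}_{f,\underline h}(I)=\prod_{J\in\mathcal{Q}}\psi_{f,\underline h}(I\cap J)$. *)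

(* Defs.v *)
From HB Require Import structures.
From mathcomp Require Import all_boot all_order all_algebra.
From mathcomp Require Import all_classical all_reals all_analysis.
Set Implicit Arguments. Unset Strict Implicit. Unset Printing Implicit Defensive.
Import Order.TTheory GRing.Theory Num.Theory.
Local Open Scope ring_scope.
Local Open Scope classical_set_scope.

Section Defs.
Variable R : realType.

Definition is_group (H : Type) (mul : H -> H -> H) (inv : H -> H) (e : H) : Prop :=
  [/\ forall x y z, mul x (mul y z) = mul (mul x y) z,
      forall x, mul e x = x, forall x, mul x e = x,
      forall x, mul (inv x) x = e & forall x, mul x (inv x) = e].

Definition is_metric (H : Type) (d : H -> H -> R) : Prop :=
  [/\ forall x y, 0 <= d x y, forall x y, d x y = 0 <-> x = y,
      forall x y, d x y = d y x & forall x y z, d x z <= d x y + d y z].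

Definition left_invariant (H : Type) (mul : H -> H -> H) (d : H -> H -> R) : Prop :=
  forall g x y, d (mul g x) (mul g y) = d x y.

Definition is_mp_action (H : Type) (mul : H -> H -> H) (e : H)
  (dX : measure_display) (X : measurableType dX) (mu : probability X R)
  (act : H -> X -> X) : Prop :=
  [/\ forall x, act e x = x,
      forall g h x, act (mul g h) x = act g (act h x),
      forall h, measurable_fun setT (act h) &
      forall h (B : set X), measurable B -> mu (act h @^-1` B) = mu B].

Definition hact (H : Type) (inv : H -> H) (X : Type) (act : H -> X -> X)
  (h : H) (f : X -> R) : X -> R := fun x => f (act (inv h) x).

Definition muI (dX : measure_display) (X : measurableType dX) (mu : probability X R)
  (f : X -> R) : R := fine (\int[mu]_x (f x)%:E)%E.

Definition is_inv_subalgebra (H : Type) (inv : H -> H)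
  (dX : measure_display) (X : measurableType dX) (mu : probability X R)
  (act : H -> X -> X) (A : set (X -> R)) : Prop :=
  (forall f, A f -> measurable_fun setT f) /\
  (forall f, A f -> exists M : R, {ae mu, forall x, `|f x| <= M}) /\
  (forall f g, A f -> A g -> A (f \+ g)) /\
  (forall f g, A f -> A g -> A (f \* g)) /\
  (forall (c : R) f, A f -> A (fun x => c * f x)) /\
  (forall h f, A f -> A (hact inv act h f)).

Definition seminorms_ok (H : Type) (inv : H -> H) (e : H) (d : H -> H -> R)
  (dX : measure_display) (X : measurableType dX) (mu : probability X R)
  (act : H -> X -> X) (A : set (X -> R)) (N : nat -> (X -> R) -> R)
  (sigma : nat -> R) : Prop :=
  (forall s, (1 <= s)%N -> forall f g, A f -> A g -> N s (f \+ g) <= N s f + N s g) /\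
  (forall s, (1 <= s)%N -> forall (c : R) f, A f -> N s (fun x => c * f x) = `|c| * N s f) /\
  (forall s, (1 <= s)%N -> exists C : R, forall f, A f -> N s f <= C * N s.+1 f) /\
  (forall s, (1 <= s)%N -> exists C : R, forall f, A f ->
          {ae mu, forall x, `|f x| <= C * N s f}) /\
  (forall s, (1 <= s)%N -> exists C : R, forall h f, A f ->
          N s (hact inv act h f) <= C * expR (sigma s * d h e) * N s f) /\
  (forall s, (1 <= s)%N -> exists C : R, forall f1 f2, A f1 -> A f2 ->
          N s (f1 \* f2) <= C * N s.+1 f1 * N s.+1 f2).

Local Open Scope ereal_scope.
Definition sepmin (H : Type) (d : H -> H -> R) (I : finType) (h : I -> H) : \bar R :=
  \big[mine/+oo]_(i : I) \big[mine/+oo]_(j : I | i != j) (d (h i) (h j))%:E.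
Definition dsup (H : Type) (d : H -> H -> R) (I : finType) (h : I -> H) (J : {set I}) : \bar R :=
  \big[maxe/-oo]_(i in J) \big[maxe/-oo]_(j in J) (d (h i) (h j))%:E.
Definition dbetween (H : Type) (d : H -> H -> R) (I : finType) (h : I -> H)
  (J K : {set I}) : \bar R :=
  \big[mine/+oo]_(i in J) \big[mine/+oo]_(j in K) (d (h i) (h j))%:E.
Definition dQmax (H : Type) (d : H -> H -> R) (I : finType) (h : I -> H)
  (Q : {set {set I}}) : \bar R :=
  \big[maxe/-oo]_(J in Q) dsup d h J.
Definition dQmin (H : Type) (d : H -> H -> R) (I : finType) (h : I -> H)
  (Q : {set {set I}}) : \bar R :=
  \big[mine/+oo]_(J in Q) \big[mine/+oo]_(K in Q | J != K) dbetween d h J K.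
Definition DeltaQ (H : Type) (d : H -> H -> R) (I : finType) (Q : {set {set I}})
  (alpha beta : R) : set (I -> H) :=
  [set h | dQmax d h Q <= alpha%:E /\ beta%:E < dQmin d h Q].
Local Close Scope ereal_scope.

Definition exp_mixing_all_orders (H : Type) (inv : H -> H) (d : H -> H -> R)
  (dX : measure_display) (X : measurableType dX) (mu : probability X R)
  (act : H -> X -> X) (A : set (X -> R)) (N : nat -> (X -> R) -> R)
  (delta : nat -> R) (sk : nat -> nat) : Prop :=
  forall k, (2 <= k)%N ->
    0 < delta k /\ (0 < sk k)%N /\
    forall s, (sk k < s)%N -> exists C : R,
      forall (f : 'I_k -> X -> R) (h : 'I_k -> H), (forall i, A (f i)) ->
        `| muI mu (fun x => \prod_(i < k) hact inv act (h i) (f i) x)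
           - \prod_(i < k) muI mu (f i) |
        <= C * expR (- (delta k * fine (sepmin d h))) * \prod_(i < k) N s (f i).

Definition psi (H : Type) (inv : H -> H)
  (dX : measure_display) (X : measurableType dX) (mu : probability X R)
  (act : H -> X -> X) (I : finType) (f : X -> R) (h : I -> H) (J : {set I}) : R :=
  if J == finset.set0 then 1
  else muI mu (fun x => \prod_(i in J) hact inv act (h i) f x).

Definition psiQ (H : Type) (inv : H -> H)
  (dX : measure_display) (X : measurableType dX) (mu : probability X R)
  (act : H -> X -> X) (I : finType) (Q : {set {set I}}) (f : X -> R) (h : I -> H)
  (J : {set I}) : R :=
  \prod_(K in Q) psi inv mu act f h (J :&: K).

End Defs.

(* Main.v *)
Require Import Defs.
From HB Require Import structures.
From mathcomp Require Import all_boot all_order all_algebra.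
From mathcomp Require Import all_classical all_reals all_analysis.
From mathcomp Require Import measurable_realfun.
Import Order.TTheory GRing.Theory Num.Theory.
Local Open Scope ring_scope.

Lemma int_inv (R : realType) (dX : measure_display) (X : measurableType dX) (mu : probability X R)
  (phi : X -> X) (mphi : measurable_fun setT phi)
  (hp : forall B, measurable B -> mu (phi @^-1` B)%classic = mu B)
  (F : X -> R) (mF : measurable_fun setT F) :
 (\int[mu]_x (F (phi x))%:E = \int[mu]_x (F x)%:E)%E.
Proof.
have mFE : measurable_fun setT (EFin \o F) by apply/measurable_EFinP.
have key : forall g : X -> \bar R, measurable_fun setT g -> (forall y, (0 <= g y)%E) ->
   (\int[mu]_x (g (phi x)) = \int[mu]_x g x)%E.
  move=> g mg g0.
  have := @ge0_integral_pushforward _ _ X X R phi mphi mu setT g measurableT mg (fun y _ => g0 y).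
  rewrite preimage_setT => <-.
  apply: eq_measure_integral => B mB _ /=.
  by rewrite /pushforward hp.
rewrite (_ : (fun x => (F (phi x))%:E) = (EFin \o F) \o phi) //.
rewrite integralE [RHS]integralE funepos_comp funeneg_comp.
rewrite -(key _ (measurable_funepos mFE)); last by move=> y; exact: funepos_ge0.
rewrite -(key _ (measurable_funeneg mFE)); last by move=> y; exact: funeneg_ge0.
by [].
Qed.

Lemma prod_partition (R : comRingType) (T : finType) (Q : {set {set T}})
  (hQ : finset.partition Q finset.setT) (I : {set T}) (F : T -> R) :
  \prod_(i in I) F i = \prod_(K in [set K in Q | I :&: K != finset.set0]) \prod_(i in I :&: K) F i.
Proof.
case/and3P: hQ => /eqP cov triv _.
have inc : forall i, i \in finset.cover Q by move=> i; rewrite cov inE.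
rewrite (partition_big (finset.pblock Q) (mem [set K in Q | I :&: K != finset.set0])) /=; last first.
  move=> i iI; rewrite inE finset.pblock_mem ?inc //=.
  by apply/set0Pn; exists i; rewrite inE iI finset.mem_pblock inc.
apply: eq_bigr => K; rewrite inE => /andP [KQ _].
apply: eq_bigl => i; rewrite inE.
case iK: (i \in K).
  by rewrite (finset.def_pblock triv KQ iK) eqxx !andbT.
case: eqP; rewrite ?andbF ?andbT //.
by move=> pK; move: iK; rewrite -pK finset.mem_pblock inc.
Qed.

Lemma grp_lem (H : Type) (mul : H -> H -> H) (inv : H -> H) (e : H)
  (Hgrp : is_group mul inv e) a b : mul (inv (mul a b)) a = inv b.
Proof.
case: Hgrp => assoc e_l e_r inv_l inv_r.
have h1 : mul (mul a b) (inv b) = a by rewrite -assoc inv_r e_r.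
by rewrite -{2}h1 assoc inv_l e_l.
Qed.

From mathcomp Require Import ring lra zify.

Lemma N_ge0 (R : realType) (X : Type) (A : (X -> R) -> Prop) (N : nat -> (X -> R) -> R)
  (Asc : forall (c : R) f, A f -> A (fun x => c * f x))
  (Nsub : forall s, (1 <= s)%N -> forall f g, A f -> A g -> N s (f \+ g) <= N s f + N s g)
  (Nhom : forall s, (1 <= s)%N -> forall (c : R) f, A f -> N s (fun x => c * f x) = `|c| * N s f)
  t (ht : (1 <= t)%N) f (hf : A f) : 0 <= N t f.
Proof.
have e0 : N t (fun x => 0 * f x) = 0 by rewrite Nhom // normr0 mul0r.
have e1 : (fun x => 0 * f x) = f \+ (fun x => -1 * f x).
  by apply/funext => x /=; rewrite mul0r mulN1r subrr.
have := Nsub t ht f _ hf (Asc (-1) f hf).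
rewrite -e1 e0 Nhom // normrN normr1 mul1r => h; lra.
Qed.

Lemma N_mono (R : realType) (X : Type) (A : (X -> R) -> Prop) (N : nat -> (X -> R) -> R)
  (Nge0 : forall t, (1 <= t)%N -> forall f, A f -> 0 <= N t f)
  (Nmon : forall s, (1 <= s)%N -> exists C : R, forall f, A f -> N s f <= C * N s.+1 f)
  t (ht : (1 <= t)%N) : forall k, exists C : R, 0 <= C /\ forall f, A f -> N t f <= C * N (t + k)%N f.
Proof.
elim=> [|k [C [C0 HC]]].
  by exists 1; split => // f _; rewrite addn0 mul1r.
have [C' HC'] := Nmon (t + k)%N (leq_trans ht (leq_addr _ _)).
exists (C * Num.max C' 0); split.
  by rewrite mulr_ge0 // le_max lexx orbT.
move=> f hf; apply: (le_trans (HC f hf)); rewrite -mulrA ler_wpM2l //.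
apply: (le_trans (HC' f hf)); rewrite addnS; apply: ler_wpM2r.
  by apply: Nge0 => //; rewrite -addnS (leq_trans ht (leq_addr _ _)).
by rewrite le_max lexx.
Qed.

Lemma prod_set1_fun (R : realType) (X : Type) (T : finType) (a : T) (g : T -> X -> R) :
  (fun x => \prod_(i in [set a]) g i x) = g a.
Proof. by apply/funext => x; rewrite big_set1. Qed.

Lemma prod_split_fun (R : realType) (X : Type) (T : finType) (S : {set T}) (a : T) (g : T -> X -> R) :
  a \in S ->
  (fun x => \prod_(i in S) g i x) = g a \* (fun x => \prod_(i in S :\ a) g i x).
Proof.
move=> aS; apply/funext => x /=; rewrite (bigD1 a) //=; congr (_ * _).
by apply: eq_bigl => i; rewrite !inE andbC.
Qed.

Lemma A_prod (R : realType) (X : Type) (A : (X -> R) -> Prop) (T : finType)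
  (Amul : forall f g, A f -> A g -> A (f \* g)) :
  forall n (S : {set T}) (g : T -> X -> R), #|S| = n.+1 -> (forall i, A (g i)) ->
  A (fun x => \prod_(i in S) g i x).
Proof.
elim=> [|n IH] S g hS hg.
  have /cards1P [a ->] : #|S| == 1%N by rewrite hS.
  by rewrite prod_set1_fun.
have /card_gt0P [a aS] : (0 < #|S|)%N by rewrite hS.
rewrite (@prod_split_fun R X T S a g aS); apply: Amul => //; apply: IH => //.
by move: hS; rewrite (cardsD1 a) aS => -[].
Qed.

Lemma N_prod (R : realType) (X : Type) (A : (X -> R) -> Prop) (N : nat -> (X -> R) -> R)
  (T : finType)
  (Amul : forall f g, A f -> A g -> A (f \* g))
  (Nge0 : forall t, (1 <= t)%N -> forall f, A f -> 0 <= N t f)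
  (Nmon : forall t, (1 <= t)%N -> forall k, exists C : R, 0 <= C /\
            forall f, A f -> N t f <= C * N (t + k)%N f)
  (Nmul : forall s, (1 <= s)%N -> exists C : R, forall f1 f2, A f1 -> A f2 ->
          N s (f1 \* f2) <= C * N s.+1 f1 * N s.+1 f2)
  (u : nat) :
  forall m t, (1 <= t)%N -> (t + m <= u)%N -> exists C : R, 0 <= C /\
  forall (S : {set T}) (g : T -> X -> R), (0 < #|S|)%N -> (#|S| <= m.+1)%N ->
    (forall i, A (g i)) ->
    N t (fun x => \prod_(i in S) g i x) <= C * \prod_(i in S) N u (g i).
Proof.
have ge0u : (1 <= u)%N -> forall (S : {set T}) (g : T -> X -> R), (forall i, A (g i)) ->
    0 <= \prod_(i in S) N u (g i).
  by move=> hu S g hg; apply: prodr_ge0 => i _; exact: Nge0.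
have single : forall t, (1 <= t)%N -> (t <= u)%N -> exists C : R, 0 <= C /\
    forall (S : {set T}) (g : T -> X -> R), #|S| = 1%N -> (forall i, A (g i)) ->
    N t (fun x => \prod_(i in S) g i x) <= C * \prod_(i in S) N u (g i).
  move=> t ht htu; have [C [C0 HC]] := Nmon t ht (u - t)%N.
  exists C; split => // S g hS hg.
  have /cards1P [a ->] : #|S| == 1%N by rewrite hS.
  by rewrite prod_set1_fun big_set1 -(subnKC htu); exact: HC.
elim=> [|m IH] t ht htu.
  have [C [C0 HC]] := single t ht (leq_trans (leq_addr _ _) htu).
  exists C; split => // S g S0 S1 hg; apply: HC => //.
  by apply/eqP; rewrite eqn_leq S1 S0.
have hu : (1 <= u)%N by apply: leq_trans ht (leq_trans (leq_addr _ _) htu).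
have [C1 [C10 HC1]] := single t ht (leq_trans (leq_addr _ _) htu).
have [Cp HCp] := Nmul t ht.
have ht1 : (1 <= t.+1)%N by [].
have [C2 [C20 HC2]] := Nmon t.+1 ht1 (u - t.+1)%N.
have htm : (t.+1 + m <= u)%N by rewrite addSnnS.
have [C3 [C30 HC3]] := IH t.+1 ht1 htm.
have htu1 : (t.+1 <= u)%N by apply: leq_trans htu; rewrite addnS ltnS leq_addr.
exists (C1 + Num.max Cp 0 * C2 * C3); split.
  by rewrite addr_ge0 // !mulr_ge0 // le_max lexx orbT.
move=> S g S0 S1 hg.
have [/eqP S1'|Sn1] := boolP (#|S| == 1%N).
  apply: (le_trans (HC1 S g S1' hg)); apply: ler_wpM2r; first exact: ge0u.
  by rewrite lerDl !mulr_ge0 // le_max lexx orbT.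
have /card_gt0P [a aS] := S0.
have cS' : #|S| = (#|S :\ a|).+1 by rewrite (cardsD1 a) aS.
have S'0 : (0 < #|S :\ a|)%N.
  by move: Sn1 S0; rewrite cS' ltnS lt0n; case: (#|S :\ a|).
have S'1 : (#|S :\ a| <= m.+1)%N by rewrite -ltnS -cS'.
have AG' : A (fun x => \prod_(i in S :\ a) g i x).
  by apply: (@A_prod R X A T Amul (#|S :\ a|).-1) => //; rewrite prednK.
rewrite (@prod_split_fun R X T S a g aS).
apply: (le_trans (HCp _ _ (hg a) AG')).
have Nga := Nge0 _ ht1 _ (hg a).
have NG' := Nge0 _ ht1 _ AG'.
apply: (@le_trans _ _ (Num.max Cp 0 * (C2 * N u (g a)) * (C3 * \prod_(i in S :\ a) N u (g i)))).
  have HC2' : forall f, A f -> N t.+1 f <= C2 * N u f.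
    by move=> f hf; have := HC2 f hf; rewrite subnKC.
  rewrite -mulrA -[X in _ <= X]mulrA.
  apply: (@le_trans _ _ (Num.max Cp 0 * (N t.+1 (g a) * N t.+1 (fun x => \prod_(i in S :\ a) g i x)))).
    by apply: ler_wpM2r; [rewrite mulr_ge0 | rewrite le_max lexx].
  apply: ler_wpM2l; first by rewrite le_max lexx orbT.
  apply: ler_pM => //; first exact: HC2'.
  exact: HC3.
have -> : \prod_(i in S) N u (g i) = N u (g a) * \prod_(i in S :\ a) N u (g i).
  by rewrite (bigD1 a) //=; congr (_ * _); apply: eq_bigl => i; rewrite !inE andbC.
apply: (@le_trans _ _ (Num.max Cp 0 * C2 * C3 * (N u (g a) * \prod_(i in S :\ a) N u (g i)))).
  by rewrite le_eqVlt; apply/orP; left; apply/eqP; ring.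
apply: ler_wpM2r; first by rewrite mulr_ge0 ?Nge0 ?ge0u.
by rewrite lerDr.
Qed.

Section EL.
Local Open Scope ereal_scope.

Lemma bigmaxe_ge {R : realType} {T : finType} {P : pred T} (F : T -> \bar R) i :
  P i -> F i <= \big[maxe/-oo]_(j | P j) F j.
Proof. by move=> Pi; rewrite (bigD1 i) //= le_max lexx. Qed.

Lemma bigmine_le {R : realType} {T : finType} {P : pred T} (F : T -> \bar R) i :
  P i -> \big[mine/+oo]_(j | P j) F j <= F i.
Proof. by move=> Pi; rewrite (bigD1 i) //= ge_min lexx. Qed.

Lemma bigmine_ge {R : realType} {T : finType} {P : pred T} (F : T -> \bar R) x :
  (forall j, P j -> x <= F j) -> x <= \big[mine/+oo]_(j | P j) F j.
Proof.
move=> HF; apply: (big_ind (fun y => x <= y)) => //; first exact: leey.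
by move=> y z xy xz; rewrite le_min xy xz.
Qed.

End EL.

Lemma dQmax_le (R : realType) (H : Type) (d : H -> H -> R) (I : finType) (h : I -> H)
  (Q : {set {set I}}) J i j (alpha : R) : J \in Q -> i \in J -> j \in J ->
  (dQmax d h Q <= alpha%:E)%E -> d (h i) (h j) <= alpha.
Proof.
move=> JQ iJ jJ hm; rewrite -lee_fin; apply: le_trans hm.
rewrite /dQmax; apply: (@le_trans _ _ (dsup d h J)); last by apply: bigmaxe_ge.
rewrite /dsup; apply: (@le_trans _ _ (\big[maxe/-oo]_(j0 in J) (d (h i) (h j0))%:E)%E); last first.
  by apply: (bigmaxe_ge (fun i => \big[maxe/-oo]_(j0 in J) (d (h i) (h j0))%:E)%E).
by apply: (bigmaxe_ge (fun j => (d (h i) (h j))%:E)).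
Qed.

Lemma dQmin_lt (R : realType) (H : Type) (d : H -> H -> R) (I : finType) (h : I -> H)
  (Q : {set {set I}}) J K i j (beta : R) : J \in Q -> K \in Q -> J != K -> i \in J -> j \in K ->
  (beta%:E < dQmin d h Q)%E -> beta < d (h i) (h j).
Proof.
move=> JQ KQ JK iJ jK hm; rewrite -lte_fin; apply: (lt_le_trans hm).
rewrite /dQmin.
apply: (@le_trans _ _ (\big[mine/+oo]_(K0 in Q | J != K0) dbetween d h J K0)%E).
  by apply: (bigmine_le (fun J => \big[mine/+oo]_(K0 in Q | J != K0) dbetween d h J K0)%E).
apply: (@le_trans _ _ (dbetween d h J K)).
  by apply: (bigmine_le (fun K0 => dbetween d h J K0)); rewrite KQ JK.
rewrite /dbetween.
apply: (@le_trans _ _ (\big[mine/+oo]_(j0 in K) (d (h i) (h j0))%:E)%E).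
  by apply: (bigmine_le (fun i => \big[mine/+oo]_(j0 in K) (d (h i) (h j0))%:E)%E).
by apply: (bigmine_le (fun j => (d (h i) (h j))%:E)).
Qed.
Lemma sepmin_ge (R : realType) (H : Type) (d : H -> H -> R) (k : nat) (hk : (2 <= k)%N)
  (h : 'I_k -> H) (beta : R) :
  (forall i j, i != j -> beta < d (h i) (h j)) -> beta <= fine (sepmin d h).
Proof.
move=> hsep.
have lo : (beta%:E <= sepmin d h)%E.
  apply: bigmine_ge => i _; apply: bigmine_ge => j ij.
  by rewrite lee_fin ltW // hsep.
have i0 : (0 < k)%N by apply: leq_trans hk.
have hi : (sepmin d h <= (d (h (Ordinal i0)) (h (Ordinal hk)))%:E)%E.
  rewrite /sepmin.
  apply: (@le_trans _ _ (\big[mine/+oo]_(j : 'I_k | Ordinal i0 != j) (d (h (Ordinal i0)) (h j))%:E)%E).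
    by apply: (bigmine_le (fun i => \big[mine/+oo]_(j | i != j) (d (h i) (h j))%:E)%E).
  by apply: (bigmine_le (fun j => (d (h (Ordinal i0)) (h j))%:E)).
by move: lo hi; case: (sepmin d h) => [x| |] //=.
Qed.

Lemma pow_bound (R : realType) (x : R) (n m : nat) : 0 <= x -> (n <= m)%N ->
  x ^+ n <= (Num.max 1 x) ^+ m.
Proof.
move=> x0 nm; have y1 : 1 <= Num.max 1 x by rewrite le_max lexx.
apply: (@le_trans _ _ (Num.max 1 x ^+ n)); last exact: ler_weXn2l.
apply: lerXn2r; rewrite ?nnegrE //; first exact: le_trans y1.
by rewrite le_max lexx orbT.
Qed.

Lemma dist_lem (R : realType) (H : Type) (mul : H -> H -> H) (inv : H -> H) (e : H) (d : H -> H -> R)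
  (Hgrp : is_group mul inv e) (Hinv : left_invariant mul d) a b :
  d (mul (inv b) a) e = d a b.
Proof.
by case: Hgrp => _ _ _ inv_l _; rewrite -(inv_l b) Hinv.
Qed.

Lemma rearr1 (R : comRingType) (a b c d e f : R) : a * b * (c * (d * e * f)) = a * b * f * (c * d * e).
Proof. by ring. Qed.

Lemma rearr2 (R : comRingType) (a b f p q g : R) : a * p * q * (b * g) * f = a * b * f * (p * q * g).
Proof. by ring. Qed.

Theorem lemma9p1 (R : realType)
  (H : Type) (mul : H -> H -> H) (inv : H -> H) (e : H) (d : H -> H -> R)
  (dX : measure_display) (X : measurableType dX) (mu : probability X R)
  (act : H -> X -> X) (A : set (X -> R)) (N : nat -> (X -> R) -> R)
  (sigma delta : nat -> R) (sk : nat -> nat)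
  (Hgrp : is_group mul inv e) (Hmet : is_metric d) (Hinv : left_invariant mul d)
  (Hact : is_mp_action mul e mu act)
  (HA : is_inv_subalgebra inv mu act A)
  (HN : seminorms_ok inv e d mu act A N sigma)
  (Hsig_pos : forall s, (1 <= s)%N -> 0 < sigma s)
  (Hsig_mon : forall s t, (1 <= s)%N -> (s <= t)%N -> sigma s <= sigma t)
  (Hsk_mon : forall k l, (2 <= k)%N -> (k <= l)%N -> (sk k <= sk l)%N)
  (Hdelta_mon : forall k l, (2 <= k)%N -> (k <= l)%N -> delta l <= delta k)
  (Hdelta_sig : forall k s, (2 <= k)%N -> (1 <= s)%N -> delta k < k%:R * sigma s)
  (Hmix : exp_mixing_all_orders inv d mu act A N delta sk)
  (r : nat) (hr : (3 <= r)%N) (s : nat) (hs : (sk r + r < s)%N) :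
  exists C : R,
    forall alpha beta : R, 0 <= alpha -> alpha < beta ->
    forall Q : {set {set 'I_r}}, finset.partition Q (finset.setT : {set 'I_r}) ->
    forall h : 'I_r -> H, DeltaQ d Q alpha beta h ->
    forall f : X -> R, A f ->
    forall I : {set 'I_r},
      `| psi inv mu act f h I - psiQ inv mu act Q f h I |
      <= C * expR (- (beta * delta r - r%:R * alpha * sigma s)) * N s f ^+ #|I|.
Proof.
case: HA => Ameas [Abdd [Aadd [Amul [Asc Aact]]]].
case: HN => Nsub [Nhom [Nmon [Nbdd [Nact Nmul]]]].
case: (Hact) => act_e act_mul act_meas act_mp.
have Nge0 := @N_ge0 R X A N Asc Nsub Nhom.
have Nmono := fun t ht => @N_mono R X A N Nge0 Nmon t ht.
have r2 : (2 <= r)%N by apply: leq_trans hr.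
have [dr0 _] := Hmix r r2.
have s1 : (1 <= s)%N by apply: leq_trans hs.
pose s' := (s - r).+1.
have s'1 : (1 <= s')%N by [].
have s'r : (s' + r.-1 <= s)%N.
  rewrite /s'; move: hs hr; clear; move=> hs hr; lia.
have hCm : forall k, exists C : R, 0 <= C /\ ((2 <= k)%N -> (k <= r)%N ->
   forall (f : 'I_k -> X -> R) (h : 'I_k -> H), (forall i, A (f i)) ->
        `| muI mu (fun x => \prod_(i < k) hact inv act (h i) (f i) x)
           - \prod_(i < k) muI mu (f i) |
        <= C * expR (- (delta k * fine (sepmin d h))) * \prod_(i < k) N s' (f i)).
  move=> k; case: (boolP ((2 <= k) && (k <= r))%N) => [/andP[k2 kr]|nk]; last first.
    by exists 0; split => // k2 kr; rewrite k2 kr in nk.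
  have [_ [_ Hm]] := Hmix k k2.
  have sks : (sk k < s')%N.
    have := Hsk_mon k r k2 kr; move: hs; rewrite /s'; clear; move=> hs hk; lia.
  have [C HC] := Hm s' sks.
  exists (Num.max C 0); split; first by rewrite le_max lexx orbT.
  move=> _ _ f0 h0 hf0; apply: (le_trans (HC f0 h0 hf0)); apply: ler_wpM2r.
    by apply: prodr_ge0 => i _; apply: Nge0.
  by apply: ler_wpM2r; [exact: expR_ge0 | rewrite le_max lexx].
case: (choice hCm) => Cm HCm.
pose CM := \sum_(k < r.+1) Cm k.
have CMge : forall k, (k <= r)%N -> Cm k <= CM.
  move=> k kr; rewrite /CM (bigD1 (Ordinal (kr : (k < r.+1)%N))) //= lerDl.
  by apply: sumr_ge0 => i _; exact: (HCm i).1.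
have [Cp [Cp0 HCp]] := @N_prod R X A N 'I_r Amul Nge0 Nmono Nmul s r.-1 s' s'1 s'r.
have [Ca0 HCa0] := Nact s s1.
pose Ca := Num.max Ca0 0.
have Ca0' : 0 <= Ca by rewrite le_max lexx orbT.
have HCa : forall g f, A f -> N s (hact inv act g f) <= Ca * expR (sigma s * d g e) * N s f.
  move=> g f0 hf0; apply: (le_trans (HCa0 g f0 hf0)); apply: ler_wpM2r; first exact: Nge0.
  by apply: ler_wpM2r; [exact: expR_ge0 | rewrite le_max lexx].
exists (CM * (Num.max 1 Cp) ^+ r * (Num.max 1 Ca) ^+ r).
move=> alpha beta ha hab Q hQ h [hmax hmin] f hf I.
have RHS0 : 0 <= CM * Num.max 1 Cp ^+ r * Num.max 1 Ca ^+ r *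
    expR (- (beta * delta r - r%:R * alpha * sigma s)) * N s f ^+ #|I|.
  apply: mulr_ge0; last by apply: exprn_ge0; exact: Nge0.
  apply: mulr_ge0; last exact: expR_ge0.
  apply: mulr_ge0; last by apply: exprn_ge0; rewrite le_max ler01.
  apply: mulr_ge0; last by apply: exprn_ge0; rewrite le_max ler01.
  by apply: le_trans (CMge 0%N (leq0n _)); exact: (HCm 0%N).1.
have [I0|I0] := eqVneq I finset.set0.
  have -> : psi inv mu act f h I = 1 by rewrite /psi I0 eqxx.
  have -> : psiQ inv mu act Q f h I = 1.
    by rewrite /psiQ big1 // => K _; rewrite /psi I0 finset.set0I eqxx.
  by rewrite subrr normr0.
case/and3P: (hQ) => /eqP cov triv _.
have inc : forall i, i \in finset.cover Q by move=> i; rewrite cov inE.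
pose Qn := [set K in Q | I :&: K != finset.set0].
have /set0Pn [i0 i0I] := I0.
pose rep K := odflt i0 [pick i in I :&: K].
have repP : forall K, K \in Qn -> rep K \in I :&: K.
  move=> K; rewrite inE => /andP [_ /set0Pn [j jIK]]; rewrite /rep.
  by case: pickP => [x // | /(_ j)]; rewrite jIK.
have QnQ : forall K, K \in Qn -> K \in Q by move=> K; rewrite inE => /andP [].
pose FK K := fun x => \prod_(i in I :&: K) hact inv act (mul (inv (h (rep K))) (h i)) f x.
have AF : forall K, K \in Qn -> A (FK K).
  move=> K KQn; apply: (@A_prod R X A 'I_r Amul (#|I :&: K|).-1).
    by rewrite prednK //; apply/card_gt0P; exists (rep K); exact: repP.
  by move=> i; exact: Aact.
have hactF : forall K, K \in Qn ->
    (fun x => \prod_(i in I :&: K) hact inv act (h i) f x) = hact inv act (h (rep K)) (FK K).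
  move=> K KQn; apply/funext => x; rewrite /hact /FK; apply: eq_bigr => i _.
  by rewrite /hact -act_mul (@grp_lem H mul inv e Hgrp).
have invar : forall g F, measurable_fun setT F -> muI mu (hact inv act g F) = muI mu F.
  move=> g F mF; rewrite /muI /hact; congr fine.
  exact: (@int_inv R dX X mu (act (inv g)) (act_meas _) (act_mp _) F mF).
have psiK : forall K, K \in Qn -> psi inv mu act f h (I :&: K) = muI mu (FK K).
  move=> K KQn; rewrite /psi; have := KQn; rewrite inE => /andP [_ /negbTE ->].
  by rewrite (hactF K KQn) invar //; apply: Ameas; exact: AF.
have psiQE : psiQ inv mu act Q f h I = \prod_(K in Qn) muI mu (FK K).
  rewrite /psiQ (bigID (fun K => I :&: K != finset.set0)) /=.
  rewrite [X in _ * X]big1 ?mulr1; last first.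
    by move=> K /andP [_ /negPn /eqP IK]; rewrite /psi IK eqxx.
  apply: eq_big => [K | K KQn]; first by rewrite inE.
  by apply: psiK; rewrite inE.
have psiIE : psi inv mu act f h I =
    muI mu (fun x => \prod_(K in Qn) hact inv act (h (rep K)) (FK K) x).
  rewrite /psi (negbTE I0); congr (muI mu _); apply/funext => x.
  rewrite (@prod_partition R _ Q hQ); apply: eq_bigr => K KQn.
  exact: (congr1 (fun F => F x) (hactF K KQn)).
have Qn0 : (0 < #|Qn|)%N.
  apply/card_gt0P; exists (finset.pblock Q i0); rewrite inE finset.pblock_mem ?inc //=.
  by apply/set0Pn; exists i0; rewrite inE i0I finset.mem_pblock inc.
have Qnr : (#|Qn| <= r)%N.
  have inj : {in Qn &, injective rep}.
    move=> K1 K2 K1Qn K2Qn eqr.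
    have := repP K1 K1Qn; rewrite inE => /andP [_ r1].
    have := repP K2 K2Qn; rewrite inE => /andP [_ r2'].
    rewrite -(finset.def_pblock triv (QnQ _ K1Qn) r1) eqr.
    exact: (finset.def_pblock triv (QnQ _ K2Qn) r2').
  by rewrite -(card_in_imset inj); apply: leq_trans (max_card _) _; rewrite card_ord.
have Ir : (#|I| <= r)%N by apply: leq_trans (max_card _) _; rewrite card_ord.
have [Qn1 | Qn2] := boolP (#|Qn| == 1%N).
  have /cards1P [K0 QnE] := Qn1.
  have K0Qn : K0 \in Qn by rewrite QnE set11.
  have mF0 : measurable_fun setT (FK K0) by apply: Ameas; exact: AF.
  rewrite psiIE psiQE QnE !big_set1.
  rewrite (_ : (fun x => _) = hact inv act (h (rep K0)) (FK K0)); last first.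
    by apply/funext => x; rewrite big_set1.
  by rewrite invar // subrr normr0.
have k2 : (2 <= #|Qn|)%N by rewrite ltn_neqAle eq_sym Qn2 Qn0.
have Hm := (HCm #|Qn|).2 k2 Qnr (fun i => FK (enum_val i)) (fun i => h (rep (enum_val i)))
   (fun i => AF _ (enum_valP i)).
have E1 : muI mu (fun x => \prod_(i < #|Qn|) hact inv act (h (rep (enum_val i))) (FK (enum_val i)) x)
    = psi inv mu act f h I.
  by rewrite psiIE; congr (muI mu _); apply/funext => x; rewrite [RHS]big_enum_val.
have E2 : \prod_(i < #|Qn|) muI mu (FK (enum_val i)) = psiQ inv mu act Q f h I.
  by rewrite psiQE [RHS]big_enum_val.
rewrite E1 E2 in Hm; apply: (le_trans Hm).
have beta0 : 0 <= beta by apply: le_trans ha (ltW hab).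
have sep : beta <= fine (sepmin d (fun i : 'I_#|Qn| => h (rep (enum_val i)))).
  apply: (@sepmin_ge R H d #|Qn| k2) => i j ij.
  have vi := enum_valP i; have vj := enum_valP j.
  have := repP _ vi; rewrite inE => /andP [_ ri].
  have := repP _ vj; rewrite inE => /andP [_ rj].
  apply: (@dQmin_lt R H d 'I_r h Q _ _ _ _ beta (QnQ _ vi) (QnQ _ vj) _ ri rj hmin).
  by rewrite (inj_eq enum_val_inj).
have Eb : expR (- (delta #|Qn| * fine (sepmin d (fun i : 'I_#|Qn| => h (rep (enum_val i))))))
    <= expR (- (delta r * beta)).
  rewrite ler_expR lerN2; apply: ler_pM => //; first exact: ltW.
  exact: Hdelta_mon.
pose x := Ca * expR (sigma s * alpha) * N s f.
have x0 : 0 <= x by rewrite /x !mulr_ge0 ?expR_ge0 //; exact: Nge0.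
have E3 : \prod_(K in Qn) N s' (FK K) = \prod_(i < #|Qn|) N s' (FK (enum_val i)).
  by rewrite big_enum_val.
have PE : \prod_(K in Qn) \prod_(i in I :&: K) x = x ^+ #|I|.
  by rewrite -prodr_const (@prod_partition R _ Q hQ I (fun _ => x)).
have Pb : \prod_(i < #|Qn|) N s' (FK (enum_val i)) <= Cp ^+ #|Qn| * x ^+ #|I|.
  rewrite -E3 -PE -prodr_const -big_split /=.
  apply: ler_prod => K KQn; apply/andP; split; first by apply: Nge0 => //; exact: AF.
  have cK : (0 < #|I :&: K|)%N by apply/card_gt0P; exists (rep K); exact: repP.
  have cK' : (#|I :&: K| <= r.-1.+1)%N.
    rewrite prednK; last by move: hr; clear; lia.
    by apply: leq_trans (max_card _) _; rewrite card_ord.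
  apply: (le_trans (HCp (I :&: K) (fun i => hact inv act (mul (inv (h (rep K))) (h i)) f)
     cK cK' (fun i => Aact _ _ hf))).
  apply: ler_wpM2l => //; apply: ler_prod => i iIK; apply/andP; split.
    by apply: Nge0 => //; exact: Aact.
  apply: (le_trans (HCa _ _ hf)); apply: ler_wpM2r; first exact: Nge0.
  apply: ler_wpM2l => //; rewrite ler_expR; apply: ler_wpM2l; first exact: ltW (Hsig_pos s s1).
  rewrite (@dist_lem R H mul inv e d Hgrp Hinv).
  have := repP K KQn; rewrite inE => /andP [_ rK].
  have := iIK; rewrite inE => /andP [_ iK].
  exact: (@dQmax_le R H d 'I_r h Q K i (rep K) alpha (QnQ _ KQn) iK rK hmax).
have Cm0 := (HCm #|Qn|).1.
apply: (@le_trans _ _ (CM * expR (- (delta r * beta)) * (Cp ^+ #|Qn| * x ^+ #|I|))).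
  apply: ler_pM.
  - by rewrite mulr_ge0 ?expR_ge0.
  - by apply: prodr_ge0 => i _; apply: Nge0 => //; apply: AF; exact: enum_valP.
  - by apply: ler_pM; [exact: Cm0 | exact: expR_ge0 | exact: CMge | exact: Eb].
  - exact: Pb.
have Cpb : Cp ^+ #|Qn| <= Num.max 1 Cp ^+ r := @pow_bound R Cp _ _ Cp0 Qnr.
have Cab : Ca ^+ #|I| <= Num.max 1 Ca ^+ r := @pow_bound R Ca _ _ Ca0' Ir.
have G1 : 1 <= expR (sigma s * alpha).
  apply: le_trans (expR_ge1Dx _); rewrite lerDl mulr_ge0 //; exact: ltW (Hsig_pos s s1).
have Gb : expR (sigma s * alpha) ^+ #|I| <= expR (sigma s * alpha) ^+ r := ler_weXn2l G1 Ir.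
have EE : expR (- (beta * delta r - r%:R * alpha * sigma s)) =
    expR (- (delta r * beta)) * expR (sigma s * alpha) ^+ r.
  by rewrite -expRM_natl -expRD; congr expR; ring.
have CM0 : 0 <= CM by apply: le_trans (CMge _ Qnr).
have M0 : 0 <= N s f by exact: Nge0.
rewrite EE /x !exprMn.
set a := CM; set b := expR (- (delta r * beta)); set c := Cp ^+ #|Qn|.
set d0 := Ca ^+ #|I|; set e0 := expR (sigma s * alpha) ^+ #|I|; set f0 := N s f ^+ #|I|.
set p := Num.max 1 Cp ^+ r; set q := Num.max 1 Ca ^+ r; set g := expR (sigma s * alpha) ^+ r.
rewrite (@rearr1 R a b c d0 e0 f0) (@rearr2 R a b f0 p q g).
have P1 : 0 <= a * b * f0.
  by apply: mulr_ge0; [apply: mulr_ge0; [exact: CM0 | exact: expR_ge0] | exact: exprn_ge0].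
apply: ler_wpM2l; first exact: P1.
apply: ler_pM.
- exact: mulr_ge0 (exprn_ge0 _ Cp0) (exprn_ge0 _ Ca0').
- exact: exprn_ge0 (expR_ge0 _).
- exact: ler_pM (exprn_ge0 _ Cp0) (exprn_ge0 _ Ca0') Cpb Cab.
- exact: Gb.
Qed.
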